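(* The set of supports of the codewords of weight $6$ of the extended binary Hamming code of length $16$, viewed as $6$-element subsets of $\{1,\dots,16\}$, is a completely regular code in the Johnson graph $J(16,6)$ with covering radius $2$.
   Context: The Johnson graph $J(n,k)$ has as vertices the $k$-element subsets of $\{1,\dots,n\}$, adjacent iff they meet in $k-1$ elements. The extended binary Hamming code of length $16$ is the $[16,11,4]$ binary code obtained from the binary Hamming code of length $15$ by adding an overall parity bit. For a nonempty vertex set $C$ of a connected regular graph, $C_i$ is the set of vertices at distance exactly $i$ from $C$, the covering radius is the largest $i$ with $C_i\neq\emptyset$, and $C$ is completely regular if there are numbers $\gamma_i,\alpha_i,\beta_i$ such that every vertex of $C_i$ has exactly $\gamma_i$ neighbours in $C_{i-1}$, $\alpha_i$ in $C_i$, $\beta_i$ in $C_{i+1}$, for all $i$. *)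

(* Defs.v *)
From mathcomp Require Import all_boot all_order all_algebra.
Set Implicit Arguments. Unset Strict Implicit. Unset Printing Implicit Defensive.
Import GRing.Theory.
Local Open Scope ring_scope.

Fixpoint walkn (V : finType) (e : rel V) (n : nat) (x y : V) : bool :=
  if n is m.+1 then [exists z, e x z && walkn e m z y] else x == y.

(* For an irreflexive relation, the set of vertices at distance exactly i
   from C: some walk of length i reaches C, none of smaller length does. *)
Definition layer (V : finType) (e : rel V) (C : {set V}) (i : nat) : {set V} :=
  [set v | [exists c in C, walkn e i v c] &&
           [forall j : 'I_i, ~~ [exists c in C, walkn e j v c]]].

Definition layer_below (V : finType) (e : rel V) (C : {set V}) (i : nat) : {set V} :=
  if i is j.+1 then layer e C j else set0.

Definition completely_regular (V : finType) (e : rel V) (C : {set V}) : Prop :=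
  C != set0 /\
  exists gamma alpha beta : nat -> nat,
    forall i (v : V), v \in layer e C i ->
      [/\ #|[set u | e v u & u \in layer_below e C i]| = gamma i,
          #|[set u | e v u & u \in layer e C i]| = alpha i &
          #|[set u | e v u & u \in layer e C i.+1]| = beta i].

Definition covering_radius_is (V : finType) (e : rel V) (C : {set V}) (r : nat) : Prop :=
  layer e C r != set0 /\ forall i : nat, (r < i)%N -> layer e C i = set0.

Definition jvert (n k : nat) := {A : {set 'I_n} | #|A| == k}.

Definition johnson_adj (n k : nat) : rel (jvert n k) :=
  fun A B => #|val A :&: val B| == k.-1.

(* Parity-check matrix of the binary Hamming code of length 15:
   column j is the binary representation of j+1. *)
Definition hamH : 'M['F_2]_(4, 15) :=
  \matrix_(k < 4, j < 15) (odd ((j.+1) %/ 2 ^ k))%:R.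

Definition hamming15 : {set 'rV['F_2]_15} := [set x | hamH *m x^T == 0].

Definition extend_parity (x : 'rV['F_2]_15) : 'rV['F_2]_16 :=
  row_mx x (\row_(j < 1) \sum_(i < 15) x 0 i).

Definition ext_hamming16 : {set 'rV['F_2]_16} :=
  [set extend_parity x | x in hamming15].

Definition supp (c : 'rV['F_2]_16) : {set 'I_16} := [set i | c 0 i != 0].

Definition weight6_supports : {set jvert 16 6} :=
  [set A : jvert 16 6 | [exists c in ext_hamming16, supp c == val A]].

(* Main.v *)
Require Import Defs.
From mathcomp Require Import all_boot all_order all_algebra.
Set Implicit Arguments. Unset Strict Implicit. Unset Printing Implicit Defensive.


Inductive trie (A : Type) := Lf of A | Nd of trie A & trie A.
Arguments Lf {A}. Arguments Nd {A}.

Fixpoint build (A : Type) (f : seq bool -> A) (n : nat) : trie A :=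
  if n is m.+1 then Nd (build (fun l => f (true :: l)) m) (build (fun l => f (false :: l)) m)
  else Lf (f [::]).

Fixpoint lookup (A : Type) (d : A) (t : trie A) (bs : seq bool) : A :=
  match t, bs with
  | Lf x, _ => x
  | Nd t1 t2, b :: bs' => lookup d (if b then t1 else t2) bs'
  | Nd _ _, [::] => d
  end.

Fixpoint checkall (n : nat) (P : seq bool -> bool) : bool :=
  if n is m.+1 then (if checkall m (fun l => P (true :: l)) then checkall m (fun l => P (false :: l)) else false)
  else P [::].

Definition ham_bit (k j : nat) : bool := odd (j.+1 %/ 2 ^ k).

Definition incode (bs : seq bool) : bool :=
  all (fun k => ~~ odd (count (fun j => ham_bit k j && nth false bs j) (iota 0 15))) (iota 0 4)
  && (nth false bs 15 == odd (count (fun j => nth false bs j) (iota 0 15))).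

Definition flip (bs : seq bool) (a b : nat) : seq bool :=
  mkseq (fun i => if i == b then true else if i == a then false else nth false bs i) 16.

Definition valid (bs : seq bool) (a b : nat) : bool :=
  if nth false bs a then ~~ nth false bs b else false.

Definition lq (ic : seq bool -> bool) (bs : seq bool) : nat :=
  if ic bs then 0 else
  if count id bs == 6 then
    (if has (fun a => has (fun b => if valid bs a b then ic (flip bs a b) else false) (iota 0 16)) (iota 0 16)
     then 1 else 2)
  else 2.

Definition cnt (f : seq bool -> nat) (bs : seq bool) (k : nat) : nat :=
  sumn [seq sumn [seq (if valid bs a b then (f (flip bs a b) == k) else false) : nat | b <- iota 0 16] | a <- iota 0 16].

Definition tab (l k : nat) : nat :=
  match l, k with
  | 0, 1 => 60
  | 1, 0 => 4 | 1, 1 => 50 | 1, 2 => 6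
  | 2, 1 => 48 | 2, 2 => 12
  | _, _ => 0 end.

Definition check_with (f : seq bool -> nat) : bool :=
  checkall 16 (fun bs => if count id bs == 6 then
     all (fun k => cnt f bs k == tab (f bs) k) [:: 0; 1; 2] else true).

Fixpoint fl (bs : seq bool) (a b : nat) : seq bool :=
  match bs with
  | [::] => [::]
  | x :: r => (if b is 1 then true else if a is 1 then false else x) :: fl r a.-1 b.-1
  end.

Definition nbl (g : nat -> nat -> seq bool) (bs : seq bool) : seq (seq bool) :=
  flatten [seq [seq g a b | b <- iota 0 16 & ~~ nth false bs b] | a <- iota 0 16 & nth false bs a].

Definition lqf (ic : seq bool -> bool) (bs : seq bool) : nat :=
  if ic bs then 0 else
  if count id bs == 6 then
    (if has ic (nbl (fun a b => fl bs a.+1 b.+1) bs) then 1 else 2)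
  else 2.

Definition checkf_with (f : seq bool -> nat) : bool :=
  checkall 16 (fun bs => if count id bs == 6 then
     let l := f bs in
     let nl := map f (nbl (fun a b => fl bs a.+1 b.+1) bs) in
     [&& count (pred1 0) nl == tab l 0, count (pred1 1) nl == tab l 1 & count (pred1 2) nl == tab l 2]
     else true).

Definition checkf2 (IT : trie bool) : bool :=
  checkf_with (lookup 0 (build (lqf (lookup false IT)) 16)).

Definition checkf : bool := checkf2 (build incode 16).

Lemma checkf_ok : checkf = true. Proof. vm_compute. reflexivity. Qed.

Lemma build_lookup (A : Type) (d : A) (f : seq bool -> A) n bs :
  size bs = n -> lookup d (build f n) bs = f bs.
Proof.
elim: n f bs => [|n IH] f [|b bs] //= [H].
by case: b; rewrite IH.
Qed.

Lemma checkallP n P bs : checkall n P -> size bs = n -> P bs.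
Proof.
elim: n P bs => [|n IH] P [|b bs] /=.
- by [].
- by move=> _ H; discriminate H.
- by move=> _ H; discriminate H.
case E1: (checkall n _) => // E2 [Hs].
by case: b; [apply: (IH (fun l => P (true :: l))) | apply: (IH (fun l => P (false :: l)))].
Qed.

Lemma size_flip bs a b : size (flip bs a b) = 16.
Proof. by rewrite size_mkseq. Qed.

Lemma lq_ext (ic1 ic2 : seq bool -> bool) bs :
  (forall bs, size bs = 16 -> ic1 bs = ic2 bs) -> size bs = 16 -> lq ic1 bs = lq ic2 bs.
Proof.
move=> H Hs; rewrite /lq H //.
have -> : has (fun a => has (fun b => if valid bs a b then ic1 (flip bs a b) else false) (iota 0 16)) (iota 0 16)
  = has (fun a => has (fun b => if valid bs a b then ic2 (flip bs a b) else false) (iota 0 16)) (iota 0 16).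
  apply: eq_has => a; apply: eq_has => b; by rewrite H // size_flip.
by [].
Qed.

Lemma cnt_ext (f1 f2 : seq bool -> nat) bs k :
  (forall bs, size bs = 16 -> f1 bs = f2 bs) -> cnt f1 bs k = cnt f2 bs k.
Proof.
move=> H; rewrite /cnt; congr sumn; apply: eq_map => a; congr sumn; apply: eq_map => b.
by rewrite H // size_flip.
Qed.

Definition lp := lq incode.

Lemma lp0 bs : (lp bs == 0) = incode bs.
Proof. rewrite /lp /lq; case: (incode bs) => //; case: (_ == 6) => //; by case: has. Qed.

Lemma lp_le bs : lp bs <= 2.
Proof. rewrite /lp /lq; case: (incode bs) => //; case: (_ == 6) => //; by case: has. Qed.

Lemma nth_fl bs a b i :
  nth false (fl bs a b) i =
  if (i.+1 == b) && (i < size bs) then true else if i.+1 == a then false else nth false bs i.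
Proof.
elim: bs a b i => [|x r IH] a b [|i] /=.
- by rewrite ltnn andbF; case: (_ == a).
- by rewrite ltn0 andbF; case: (_ == a).
- by case: a => [|[|a]]; case: b => [|[|b]].
- by rewrite IH; case: b => [|b] //=; case: a => [|a].
Qed.

Lemma size_fl bs a b : size (fl bs a b) = size bs.
Proof. by elim: bs a b => //= x r IH a b; rewrite IH. Qed.

Lemma fl_flip bs a b : size bs = 16 -> fl bs a.+1 b.+1 = flip bs a b.
Proof.
move=> Hs; apply: (@eq_from_nth _ false); first by rewrite size_fl size_flip.
move=> i; rewrite size_fl Hs => hi.
by rewrite nth_fl nth_mkseq // !eqSS Hs hi andbT.
Qed.

Lemma nbl_fl bs (f : seq bool -> nat) : size bs = 16 ->
  map f (nbl (fun a b => fl bs a.+1 b.+1) bs) = map f (nbl (fun a b => flip bs a b) bs).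
Proof.
move=> Hs; rewrite /nbl; congr (map f (flatten _)); apply: eq_map => a.
by apply: eq_map => b; rewrite fl_flip.
Qed.

Lemma cnt_nbl_gen (f : seq bool -> nat) (g : nat -> nat -> seq bool) bs k s1 s2 :
  sumn [seq sumn [seq (if valid bs a b then (f (g a b) == k) else false) : nat | b <- s2] | a <- s1]
  = count (pred1 k) (map f (flatten [seq [seq g a b | b <- s2 & ~~ nth false bs b] | a <- s1 & nth false bs a])).
Proof.
elim: s1 => //= a s1 IH; rewrite /valid.
case: (nth false bs a) => /=.
  rewrite map_cat count_cat IH; congr (_ + _); clear IH.
  elim: s2 => //= b s2 IH2; case: (nth false bs b) => //=.
  by rewrite IH2.
rewrite IH; clear IH; suff -> : sumn [seq (false : nat) | _ <- s2] = 0 by [].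
by elim: s2.
Qed.

Lemma has_nbl_gen (ic : seq bool -> bool) (g : nat -> nat -> seq bool) bs s1 s2 :
  has (fun a => has (fun b => if valid bs a b then ic (g a b) else false) s2) s1
  = has ic (flatten [seq [seq g a b | b <- s2 & ~~ nth false bs b] | a <- s1 & nth false bs a]).
Proof.
elim: s1 => //= a s1 IH; rewrite /valid.
case: (nth false bs a) => /=.
  rewrite has_cat IH; congr (_ || _); clear IH.
  elim: s2 => //= b s2 IH2; case: (nth false bs b) => //=.
  by rewrite IH2.
rewrite IH; clear IH; suff -> : has (fun _ => false) s2 = false by [].
by elim: s2.
Qed.

Lemma lqf_lq ic bs : size bs = 16 -> lqf ic bs = lq ic bs.
Proof.
move=> Hs; rewrite /lqf /lq has_nbl_gen.
have -> : nbl (fun a b => fl bs a.+1 b.+1) bs = nbl (fun a b => flip bs a b) bs.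
  rewrite /nbl; congr flatten; apply: eq_map => a.
  by apply: eq_map => b; rewrite fl_flip.
by [].
Qed.

Lemma key_pure bs k : size bs = 16 -> count id bs = 6 -> k < 3 -> cnt lp bs k = tab (lp bs) k.
Proof.
move=> Hs Hc Hk.
have := checkf_ok; rewrite /checkf /checkf2 /checkf_with.
set f := lookup 0 _.
have hf : forall bs, size bs = 16 -> f bs = lp bs.
  move=> bs' Hs'; rewrite /f build_lookup // lqf_lq //; apply: lq_ext => // bs'' Hs''.
  by rewrite build_lookup.
move/checkallP => /(_ bs Hs); rewrite Hc eqxx; cbv zeta.
rewrite nbl_fl // -!cnt_nbl_gen.
rewrite -!(cnt_ext _ _ hf) hf //.
by case: k Hk => [|[|[|]]] // _ /and3P [/eqP h0 /eqP h1 /eqP h2].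
Qed.

Import GRing.Theory.

Lemma sum_seq_sumn (T : Type) (s : seq T) (G : T -> nat) :
  \sum_(i <- s) G i = sumn [seq G i | i <- s].
Proof. by elim: s => [|x s IH]; rewrite ?big_nil ?big_cons ?IH. Qed.

Lemma sum_iota (n : nat) (F : 'I_n.+1 -> nat) :
  \sum_(i < n.+1) F i = sumn [seq F (inord i) | i <- iota 0 n.+1].
Proof.
transitivity (\sum_(0 <= i < n.+1) F (inord i)).
  by rewrite big_mkord; apply: eq_bigr => i _; rewrite inord_val.
by rewrite /index_iota subn0 sum_seq_sumn.
Qed.

Lemma count_sumn (T : Type) (g : pred T) (s : seq T) :
  count g s = sumn [seq (g x : nat) | x <- s].
Proof. by elim: s => //= x s ->. Qed.

Definition chi (A : {set 'I_16}) : seq bool := mkseq (fun i => inord i \in A) 16.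

Lemma size_chi A : size (chi A) = 16. Proof. by rewrite size_mkseq. Qed.

Lemma nth_chi A i : i < 16 -> nth false (chi A) i = (inord i \in A).
Proof. by move=> hi; rewrite nth_mkseq. Qed.

Lemma nth_chiO A (i : 'I_16) : nth false (chi A) i = (i \in A).
Proof. by rewrite nth_chi // inord_val. Qed.

Lemma count_chi A : count id (chi A) = #|A|.
Proof.
rewrite -sum1_card big_mkcond sum_iota count_sumn /chi /mkseq -map_comp.
congr sumn; apply: eq_map => i /=; by case: (inord i \in A).
Qed.

Lemma chi_flip A (a b : 'I_16) : chi (A :\ a :|: [set b]) = flip (chi A) a b.
Proof.
rewrite /flip {1}/chi /mkseq; apply/eq_in_map => i; rewrite mem_iota => /andP [_ hi].
rewrite !inE nth_chi //.
have Eb : (inord i == b) = (i == b) by rewrite -val_eqE /= inordK.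
have Ea : (inord i == a) = (i == a) by rewrite -val_eqE /= inordK.
rewrite Eb Ea; case: (i == b); case: (i == a); by rewrite /= ?orbT ?orbF.
Qed.

Lemma card_pairs (R : 'I_16 -> 'I_16 -> bool) :
  #|[set p : 'I_16 * 'I_16 | R p.1 p.2]| =
  sumn [seq sumn [seq (R (inord a) (inord b) : nat) | b <- iota 0 16] | a <- iota 0 16].
Proof.
rewrite -sum1_card big_mkcond.
transitivity (\sum_(a < 16) \sum_(b < 16) (R a b : nat)).
  rewrite pair_bigA /=; apply: eq_bigr => p _; rewrite inE; by case: (R _ _).
rewrite sum_iota; apply: congr1; apply: eq_map => a.
by rewrite sum_iota.
Qed.

Lemma sum_iota_nat (n : nat) (g : nat -> nat) :
  \sum_(i < n.+1) g i = sumn [seq g i | i <- iota 0 n.+1].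
Proof.
rewrite sum_iota; apply: congr1; apply/eq_in_map => i.
by rewrite mem_iota => /andP [_ hi]; rewrite inordK.
Qed.

Lemma F2_cases (x : 'F_2) : x = (x != 0)%:R%R.
Proof. by case: x => [[|[|n]]] // H; apply/val_inj. Qed.

Lemma F2_natr (n : nat) : (n%:R : 'F_2)%R = (odd n)%:R%R.
Proof. by rewrite -modn2 Fp_nat_mod. Qed.

Lemma F2_b0 (b : bool) : ((b%:R : 'F_2) != 0)%R = b.
Proof. by case: b. Qed.

Lemma ham_entry (x : 'rV['F_2]_15) (b : nat -> bool) :
  (forall j : 'I_15, x ord0 j = (b j)%:R)%R ->
  forall k : 'I_4, (hamH *m x^T)%R k ord0 = (odd (count (fun j => ham_bit k j && b j) (iota 0 15)))%:R%R.
Proof.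
move=> hx k; rewrite !mxE.
transitivity (\sum_(j < 15) (((ham_bit k j && b j) : nat)%:R : 'F_2))%R.
  apply: eq_bigr => j _; rewrite !mxE hx -natrM mulnb //.
rewrite -natr_sum F2_natr; congr (_%:R)%R; congr odd.
by rewrite (sum_iota_nat 14 (fun j => (ham_bit k j && b j) : nat)) count_sumn.
Qed.

Lemma ham_eq (x : 'rV['F_2]_15) (b : nat -> bool) :
  (forall j : 'I_15, x ord0 j = (b j)%:R)%R ->
  (hamH *m x^T == 0)%R = all (fun k => ~~ odd (count (fun j => ham_bit k j && b j) (iota 0 15))) (iota 0 4).
Proof.
move=> hx; have E := ham_entry hx.
apply/eqP/allP => [H k | H].
  rewrite mem_iota => /andP [_ hk].
  have := congr1 (fun M : 'cV_4 => M (inord k) ord0) H; rewrite E mxE inordK //.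
  by case: (odd _).
apply/matrixP => k i; rewrite ord1 E mxE.
have := H k; rewrite mem_iota ltn_ord /= => /(_ isT).
by case: (odd _).
Qed.

Lemma par_sum (x : 'rV['F_2]_15) (b : nat -> bool) :
  (forall j : 'I_15, x ord0 j = (b j)%:R)%R ->
  (\sum_(j < 15) x ord0 j)%R = (odd (count b (iota 0 15)))%:R%R.
Proof.
move=> hx.
transitivity (\sum_(j < 15) ((b j : nat)%:R : 'F_2))%R.
  by apply: eq_bigr => j _; rewrite hx.
rewrite -natr_sum F2_natr; congr (_%:R)%R; congr odd.
by rewrite (sum_iota_nat 14 (fun j => (b j) : nat)) count_sumn.
Qed.

Lemma lsh A (j : 'I_15) : nth false (chi A) j = (lshift 1 j \in A).
Proof.
have hj : (j < 16)%N by apply: (ltn_trans (ltn_ord j)).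
rewrite nth_chi //; congr (_ \in A); apply: val_inj; by rewrite /= inordK.
Qed.

Lemma rsh A : nth false (chi A) 15 = (rshift 15 (ord0 : 'I_1) \in A).
Proof.
rewrite nth_chi //; congr (_ \in A); apply: val_inj; by rewrite /= inordK.
Qed.

Lemma incodeP (A : {set 'I_16}) :
  [exists c in ext_hamming16, supp c == A] = incode (chi A).
Proof.
apply/idP/idP.
  case/existsP => c /andP [cE /eqP sA]; case/imsetP: cE => x xH cx.
  rewrite inE in xH; subst c.
  have hx : forall j : 'I_15, x ord0 j = (nth false (chi A) j)%:R%R.
    move=> j; rewrite lsh -sA inE /extend_parity. rewrite (row_mxEl (n1:=15) (n2:=1)).
    exact: F2_cases.
  rewrite /incode -(ham_eq hx) xH.
  rewrite rsh -{1}sA inE /extend_parity (row_mxEr (n1:=15) (n2:=1)) mxE (par_sum hx) F2_b0.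
  by apply/eqP.
case/andP => hH /eqP hP.
pose x : 'rV['F_2]_15 := (\row_(j < 15) (nth false (chi A) j)%:R)%R.
have hx : forall j : 'I_15, x ord0 j = (nth false (chi A) j)%:R%R by move=> j; rewrite mxE.
apply/existsP; exists (extend_parity x); apply/andP; split.
  apply/imsetP; exists x => //; rewrite inE (ham_eq hx) //.
apply/eqP/setP => i; rewrite inE.
rewrite -[i](@splitK 15 1); case: (@split 15 1 i) => j /=.
  by rewrite /extend_parity (row_mxEl (n1:=15) (n2:=1)) hx F2_b0 lsh.
rewrite /extend_parity (row_mxEr (n1:=15) (n2:=1)) mxE (par_sum hx) F2_b0 -hP rsh ord1.
by rewrite (ord1 j).
Qed.

Lemma card_nbr (v : jvert 16 6) (P : {set 'I_16} -> bool) :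
  #|[set u : jvert 16 6 | johnson_adj v u & P (val u)]| =
  #|[set p : 'I_16 * 'I_16 | [&& p.1 \in val v, p.2 \notin val v & P (val v :\ p.1 :|: [set p.2])]]|.
Proof.
set S := val v.
have cS : #|S| = 6 by apply/eqP; exact: (valP v).
set D := [set p : 'I_16 * 'I_16 | _].
pose f (p : 'I_16 * 'I_16) : {set 'I_16} := S :\ p.1 :|: [set p.2].
have cD : forall a, a \in S -> #|S :\ a| = 5.
  by move=> a ha; move: cS; rewrite (cardsD1 a) ha add1n => -[].
have fE : forall p x, (x \in f p) = (x == p.2) || ((x != p.1) && (x \in S)).
  by move=> p x; rewrite !inE orbC.
have cf : forall p, p.1 \in S -> p.2 \notin S -> #|f p| = 6.
  move=> p h1 h2; rewrite /f setUC cardsU1 !inE negb_and negbK h2 orbT cD //.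
have cI : forall p, p.1 \in S -> p.2 \notin S -> #|S :&: f p| = 5.
  move=> p h1 h2.
  have -> : S :&: f p = S :\ p.1.
    apply/setP => x; rewrite inE fE !inE.
    case: (x =P p.2) => [->|_] /=; first by rewrite (negbTE h2) andbF.
    by case: (x \in S); rewrite ?andbT ?andbF.
  exact: cD.
pose g (p : 'I_16 * 'I_16) : jvert 16 6 := insubd v (f p).
have gv : forall p, p \in D -> val (g p) = f p.
  move=> p; rewrite inE => /and3P [h1 h2 _].
  by rewrite /g insubdK // unfold_in /= cf.
have -> : [set u : jvert 16 6 | johnson_adj v u & P (val u)] = g @: D.
  apply/setP => u; rewrite inE; apply/idP/imsetP.
    case/andP => adj Pu.
    set U := val u.
    have cU : #|U| = 6 by apply/eqP; exact: (valP u).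
    have cSU : #|S :&: U| = 5 by apply/eqP.
    have : #|S :\: U| == 1 by rewrite cardsD cS cSU.
    case/cards1P => a Ha.
    have : #|U :\: S| == 1 by rewrite cardsD cU setIC cSU.
    case/cards1P => b Hb.
    have aS : a \in S :\: U by rewrite Ha set11.
    have bU : b \in U :\: S by rewrite Hb set11.
    move: aS bU; rewrite !inE => /andP [aU aS] /andP [bS bU].
    have UE : U = f (a, b).
      apply/setP => x; rewrite fE /=.
      case xS: (x \in S).
        have : (x \in S :\: U) = (x == a) by rewrite Ha inE.
        rewrite inE xS andbT => <-.
        have [xb|nxb] := eqVneq x b; first by move: bS; rewrite -xb xS.
        by rewrite /= negbK andbT.
      have : (x \in U :\: S) = (x == b) by rewrite Hb inE.
      by rewrite inE xS /= andbF orbF.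
    have UE' : S :\ a :|: [set b] = U by rewrite UE.
    have abD : (a, b) \in D by rewrite inE /= aS bS UE'.
    exists (a, b) => //.
    by apply: val_inj; rewrite gv // UE.
  case=> p pD ->; move: (pD); rewrite inE => /and3P [h1 h2 hP].
  by rewrite /johnson_adj gv // cI // gv.
rewrite card_in_imset //.
move=> p q pD qD /(congr1 val); rewrite !gv // => E.
move: pD qD; rewrite !inE => /and3P [p1 p2 _] /and3P [q1 q2 _].
have e2 : p.2 = q.2.
  have : p.2 \in f q by rewrite -E fE eqxx.
  by rewrite fE (negbTE p2) andbF orbF => /eqP.
have e1 : p.1 = q.1.
  have : p.1 \notin f q.
    rewrite -E fE eqxx /= orbF; apply/negP => /eqP e.
    by move: p2; rewrite -e p1.
  rewrite fE p1 andbT negb_or negbK => /andP [_ /eqP] //.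
by case: p q e1 e2 {E p1 p2 q1 q2} => [a b] [c d] /= -> ->.
Qed.

Definition ell (v : jvert 16 6) : nat := lp (chi (val v)).

Lemma ell_le v : ell v <= 2. Proof. exact: lp_le. Qed.

Lemma inC v : (v \in weight6_supports) = (ell v == 0).
Proof. by rewrite /weight6_supports inE incodeP /ell lp0. Qed.

Lemma key v k : #|[set u | johnson_adj v u & ell u == k]| = tab (ell v) k.
Proof.
case: (ltnP k 3) => hk.
  rewrite /ell (card_nbr v (fun U => lp (chi U) == k)).
  rewrite (card_pairs (fun a b => [&& a \in val v, b \notin val v & lp (chi (val v :\ a :|: [set b])) == k])).
  rewrite -key_pure ?size_chi ?count_chi //; last by apply/eqP; exact: (valP v).
  rewrite /cnt; apply: congr1; apply/eq_in_map => a; rewrite mem_iota => /andP [_ ha].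
  apply: congr1; apply/eq_in_map => b; rewrite mem_iota => /andP [_ hb].
  rewrite /valid !nth_chi // chi_flip !inordK //.
  by case: (inord a \in val v); case: (inord b \in val v).
have -> : [set u | johnson_adj v u & ell u == k] = set0.
  apply/setP => u; rewrite !inE.
  by rewrite (ltn_eqF (leq_ltn_trans (ell_le u) hk)) andbF.
rewrite cards0.
by case: (ell v) => [|[|[|l]]]; case: k hk => [|[|[|k]]].
Qed.

Lemma nbr_ex v k : 0 < tab (ell v) k -> exists u, johnson_adj v u && (ell u == k).
Proof. by rewrite -key card_gt0 => /set0Pn [u]; rewrite inE => H; exists u. Qed.

Notation D j v := [exists c in weight6_supports, walkn (@johnson_adj 16 6) j v c].

Lemma F0 v : D 0 v = (ell v == 0).
Proof.
rewrite -inC; apply/existsP/idP => [[c /andP [cC /eqP ->]] // | vC].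
by exists v; rewrite vC /= eqxx.
Qed.

Lemma F1 v : D 1 v = (ell v == 1).
Proof.
apply/existsP/idP.
  case=> c /andP [cC /existsP [z /andP [ez /eqP zc]]]; subst z.
  have : 0 < #|[set u | johnson_adj v u & ell u == 0]|.
    by apply/card_gt0P; exists c; rewrite inE ez -inC.
  rewrite key; have := ell_le v.
  by case: (ell v) => [|[|[|l]]].
move=> /eqP h; have [u /andP [eu uC]] := @nbr_ex v 0 ltac:(by rewrite h).
exists u; rewrite inC uC /=; apply/existsP; exists u; by rewrite eu eqxx.
Qed.

Lemma F2 v : ell v == 2 -> D 2 v.
Proof.
move=> /eqP h; have [u /andP [eu u1]] := @nbr_ex v 1 ltac:(by rewrite h).
move: u1; rewrite -F1 => /existsP [c /andP [cC wc]].
apply/existsP; exists c; rewrite cC /=; apply/existsP; exists u; by rewrite eu.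
Qed.

Lemma layerE i v : (v \in layer (@johnson_adj 16 6) weight6_supports i) = (ell v == i).
Proof.
have Dl : D (ell v) v.
  have := ell_le v; case E: (ell v) => [|[|[|l]]] // _.
  - by rewrite F0 E.
  - by rewrite F1 E.
  - by apply: F2; rewrite E.
have Dlt : forall j, j < 2 -> D j v = (ell v == j).
  by case=> [|[|j]] // _; rewrite ?F0 ?F1.
rewrite /layer inE; apply/idP/idP.
  case/andP => Di /forallP Hall.
  have [lt|gt|eq] := ltngtP (ell v) i; last by [].
    by have := Hall (Ordinal lt); rewrite /= Dl.
  have hi : i < 2 by apply: (leq_trans gt); exact: ell_le.
  by move: Di; rewrite Dlt // => /eqP E; move: gt; rewrite E ltnn.
move/eqP => <-; apply/andP; split; first exact: Dl.
apply/forallP => j.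
have hj : j < 2 by apply: (leq_trans (ltn_ord j)); exact: ell_le.
by rewrite Dlt // gtn_eqF.
Qed.

Lemma cntL v j :
  #|[set u | johnson_adj v u & u \in layer (@johnson_adj 16 6) weight6_supports j]| = tab (ell v) j.
Proof.
rewrite -key; apply: eq_card => u; by rewrite [in LHS]inE layerE inE.
Qed.

Definition v0 : jvert 16 6.
Proof.
refine (exist _ [set i : 'I_16 | i < 6] _).
rewrite -count_chi.
have -> : chi [set i : 'I_16 | i < 6] = mkseq (fun i => i < 6) 16.
  apply/eq_in_map => i; rewrite mem_iota => /andP [_ hi].
  by rewrite inE inordK.
by [].
Defined.

Lemma ex_ell (l : nat) : l <= 2 -> exists v, ell v == l.
Proof.
have l0 : forall v, ell v == 0 -> exists u, ell u == 1.
  move=> v /eqP h; have [u /andP [_ hu]] := @nbr_ex v 1 ltac:(by rewrite h). by exists u.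
have l1 : forall v, ell v == 1 -> exists u, ell u == 2.
  move=> v /eqP h; have [u /andP [_ hu]] := @nbr_ex v 2 ltac:(by rewrite h). by exists u.
have l1' : forall v, ell v == 1 -> exists u, ell u == 0.
  move=> v /eqP h; have [u /andP [_ hu]] := @nbr_ex v 0 ltac:(by rewrite h). by exists u.
have l2 : forall v, ell v == 2 -> exists u, ell u == 1.
  move=> v /eqP h; have [u /andP [_ hu]] := @nbr_ex v 1 ltac:(by rewrite h). by exists u.
have e1 : exists v, ell v == 1.
  have := ell_le v0; case E: (ell v0) => [|[|[|x]]] // _.
  - by apply: (l0 v0); rewrite E.
  - by exists v0; rewrite E.
  - by apply: (l2 v0); rewrite E.
case: e1 => w hw.
case: l => [|[|[|l]]] // _.
- exact: l1' hw.
- by exists w.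
- exact: l1 hw.
Qed.

Theorem corollary5p2 :
  completely_regular (@johnson_adj 16 6) weight6_supports /\
  covering_radius_is (@johnson_adj 16 6) weight6_supports 2.
Proof.
split.
  split.
    have [v hv] := ex_ell (l := 0) isT.
    by apply/set0Pn; exists v; rewrite inC.
  exists (fun i => if i is i'.+1 then tab i i' else 0), (fun i => tab i i), (fun i => tab i i.+1).
  move=> i v; rewrite layerE => /eqP hv; split.
  - case: i hv => [|i] hv /=.
      apply/eqP; rewrite cards_eq0; apply/eqP/setP => u; by rewrite !inE andbF.
    by rewrite cntL hv.
  - by rewrite cntL hv.
  - by rewrite cntL hv.
split.
  have [v hv] := ex_ell (l := 2) isT.
  by apply/set0Pn; exists v; rewrite layerE.
move=> i hi; apply/setP => v; rewrite layerE inE.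
by rewrite (ltn_eqF (leq_ltn_trans (ell_le v) hi)).
Qed.
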